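(* Let $p=4m+1$ be a prime, put $n=2m$, and let $A_0=(a_0,\ldots,a_n)\in\mathbb{F}_p^{n+1}$ satisfy $a_i^2\neq a_j^2$ for all $0\le i<j\le n$. For $u,v\in\mathbb{F}_p$ define \[ D_{A_0}(u,v)=\det\left[\chi(a_i+a_j)+\chi(a_i-a_j)+u\,\chi(a_i^2+va_j^2)\right]_{0\le i,j\le n}. \] Then \[ D_{A_0}(u,v)\equiv(-1)^{m(2m+1)}u^{2m+1}v^{m(2m+1)}\left(\prod_{r=0}^{2m}\binom{2m}{r}\right)\prod_{0\le i<j\le 2m}(a_j^2-a_i^2)^2 \pmod p. \]
   Context: $\chi(t)=\left(\frac{t}{p}\right)$ is the Legendre symbol on $\mathbb{F}_p$, with $\chi(0)=0$; the determinant is an integer and the congruence is taken modulo $p$ (equivalently, as an identity in $\mathbb{F}_p$). *)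

(* Defs.v *)
From mathcomp Require Import all_boot all_order all_algebra.
Set Implicit Arguments. Unset Strict Implicit. Unset Printing Implicit Defensive.
Import GRing.Theory.
Local Open Scope ring_scope.

Definition legendre (p : nat) (t : 'F_p) : int :=
  if t == 0 then 0
  else if [exists y : 'F_p, y ^+ 2 == t] then 1 else -1.

(* Main.v *)
Require Import Defs.
From mathcomp Require Import all_boot all_order all_algebra all_field zify ring.
Import GRing.Theory.
Local Open Scope ring_scope.
Lemma fermat (p : nat) (hp : prime p) (y : 'F_p) : y != 0 -> y ^+ p.-1 = 1.
Proof.
move=> y0; have e : #|'F_p| = (p.-1).+1 by rewrite card_Fp // prednK // prime_gt0.
have := expf_card y; rewrite e exprS.
by move=> /(congr1 (fun z => z / y)); rewrite mulrAC divff // mul1r.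
Qed.

Lemma sqrt_exists (p m : nat) (hp : prime p) (hpm : p = (4 * m + 1)%N) (t : 'F_p) :
  t ^+ (2 * m) = 1 -> exists y : 'F_p, y ^+ 2 = t.
Proof.
move=> ht.
pose q : {poly 'F_p} := 'X^2 - t%:P.
have hdiv : q %| \prod_x ('X - x%:P).
  have e : #|'F_p| = (4 * m).+1 by rewrite card_Fp // hpm addn1.
  rewrite -finField_genPoly e exprS.
  have -> : 'X * 'X^(4 * m) - 'X = 'X * ('X^(4 * m) - 1) :> {poly 'F_p}.
    by rewrite mulrBr mulr1.
  apply: dvdp_mull.
  have -> : ('X^(4 * m) - 1 : {poly 'F_p}) = ('X^2) ^+ (2 * m) - (t%:P) ^+ (2 * m).
    by rewrite -exprM mulnA -polyC_exp ht.
  by rewrite subrXX dvdp_mulr.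
suff /existsP [y /eqP hy] : [exists y : 'F_p, y ^+ 2 == t] by exists y.
case: (boolP [exists y : 'F_p, y ^+ 2 == t]) => [//|/existsPn hno]; exfalso.
have : coprimep q (\prod_x ('X - x%:P)).
  apply: (big_ind (coprimep q)).
  - by rewrite coprimep1.
  - by move=> r s; rewrite coprimepMr => -> ->.
  - move=> x _; rewrite coprimep_XsubC /root !hornerE.
    by rewrite subr_eq0; apply: hno.
move=> /(coprimep_dvdl hdiv); rewrite coprimepp size_XnsubC //.
Qed.

Lemma euler (p m : nat) (hp : prime p) (hpm : p = (4 * m + 1)%N) (t : 'F_p) :
  (legendre t)%:~R = t ^+ (2 * m) :> 'F_p.
Proof.
have m0 : (0 < m)%N by case: m hpm => [|//] hpm; rewrite hpm in hp.
have hf : forall y : 'F_p, y != 0 -> y ^+ (4 * m) = 1.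
  by move=> y y0; rewrite -(@fermat p hp y y0); congr (_ ^+ _); rewrite hpm addn1.
rewrite /legendre; have [->|t0] := eqVneq t 0.
  by rewrite expr0n muln_eq0 /= eqn0Ngt m0.
case: existsP => [[y /eqP hy]|hn].
  rewrite -hy -exprM mulnA hf //; apply: contra_neq t0 => y0.
  by rewrite -hy y0 expr0n.
have : (t ^+ (2 * m)) ^+ 2 == 1 by rewrite -exprM mulnC mulnA hf.
rewrite sqrf_eq1 => /orP [/eqP h|/eqP ->] //.
by case: hn; have [y hy] := @sqrt_exists p m hp hpm t h; exists y; rewrite hy.
Qed.
Lemma det_antitrig (R : comRingType) n (A : 'M[R]_n) :
  (forall i j : 'I_n, (n <= i + j)%N -> A i j = 0) ->
  \det A = \prod_(j < n) ((-1) ^+ j * A (rev_ord j) j).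
Proof.
elim: n A => [|n IH] A hA; first by rewrite det_mx00 big_ord0.
rewrite (expand_det_row _ ord_max) (bigD1 ord0) //= big1 ?addr0; last first.
  move=> j j0; rewrite hA ?mul0r //; move: j0; rewrite -val_eqE /= -lt0n => ?; lia.
rewrite /cofactor IH; last first.
  move=> i j h; rewrite !mxE hA //= /bump; have := ltn_ord i; rewrite ltnNge => /negbTE ->; lia.
rewrite big_ord_recl /= expr0 mul1r.
have -> : rev_ord (ord0 : 'I_n.+1) = ord_max by apply/val_inj; rewrite /= subn1.
rewrite addn0; congr (_ * _).
have -> : (-1) ^+ n = \prod_(j < n) (-1 : R) by rewrite prodr_const card_ord.
rewrite -big_split /=.
apply: eq_bigr => j _; rewrite !mxE exprS mulrA; congr (_ * _ * A _ _).
apply/val_inj; rewrite /= /bump; have := ltn_ord (rev_ord j); rewrite ltnNge => /negbTE -> /=; lia.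
Qed.
Lemma split_even (R : nmodType) (g : nat -> R) n :
  \sum_(0 <= k < (2 * n).+1) g k =
  \sum_(0 <= l < n.+1) g (2 * l)%N + \sum_(0 <= l < n) g (2 * l).+1.
Proof.
elim: n => [|n IH]; first by rewrite !big_nat1 big_geq // addr0.
have -> : (2 * n.+1).+1 = (2 * n).+1.+2 by lia.
move: IH; rewrite !big_nat_recr //= => IH.
have -> : (2 * n.+1)%N = (2 * n).+2 by lia.
rewrite IH -!addrA; congr (_ + (_ + _)).
by rewrite [g (2 * n).+1 + _]addrC addrCA.
Qed.

Lemma sum_id_odd m : (\sum_(j < (2 * m).+1) j = m * (2 * m + 1))%N.
Proof.
rewrite -(big_mkord xpredT (fun j => j)) bin2_sum bin2odd /=; last first.
  by rewrite oddM.
have -> : (2 * m)./2 = m by rewrite mul2n doubleK.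
lia.
Qed.

Section Key.
Variables (R : comRingType) (m : nat) (m0 : (0 < m)%N) (a : 'I_(2 * m).+1 -> R) (u v : R).

Let x : 'rV[R]_((2 * m).+1) := \row_j a j ^+ 2.
Let W := Vandermonde (2 * m).+1 x.

Lemma entryE (B : 'M[R]_((2 * m).+1)) i j :
  (W^T *m B *m W) i j =
  \sum_(k < (2 * m).+1) (\sum_(r < (2 * m).+1) (a i ^+ 2) ^+ r * B r k) * (a j ^+ 2) ^+ k.
Proof.
rewrite mxE; apply: eq_bigr => k _; rewrite !mxE; congr (_ * _).
by apply: eq_bigr => r _; rewrite !mxE.
Qed.

Let B2 : 'M[R]_((2 * m).+1) :=
  \matrix_(r, k) ((r + k == 2 * m)%N%:R * (u * v ^+ k * ('C(2 * m, k))%:R)).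

Lemma B2E (X Y : R) :
  \sum_(k < (2 * m).+1) (\sum_(r < (2 * m).+1) X ^+ r * B2 r k) * Y ^+ k
  = u * (X + v * Y) ^+ (2 * m).
Proof.
rewrite exprDn big_distrr /=; apply: eq_bigr => k _.
rewrite (bigD1 (rev_ord k)) //= big1 ?addr0; last first.
  move=> r hr; rewrite !mxE; case: eqP => [h|]; last by rewrite mul0r mulr0.
  by case/eqP: hr; apply/val_inj => /=; lia.
rewrite !mxE /= subSS.
have -> : ((2 * m - k + k)%N == (2 * m)%N) by apply/eqP; have := ltn_ord k; lia.
rewrite mul1r exprMn mulr_natr -mulr_natr; ring.
Qed.

Let B1 : 'M[R]_((2 * m).+1) :=
  \matrix_(r, k) ((r + k == m)%N%:R * (2 * 'C(2 * m, 2 * k))%N%:R).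

Lemma B1E (c d : R) :
  \sum_(k < (2 * m).+1) (\sum_(r < (2 * m).+1) (c ^+ 2) ^+ r * B1 r k) * (d ^+ 2) ^+ k
  = (c + d) ^+ (2 * m) + (c - d) ^+ (2 * m).
Proof.
pose F k := (k <= m)%N%:R * ((c ^+ 2) ^+ (m - k) * (2 * 'C(2 * m, 2 * k))%N%:R) * (d ^+ 2) ^+ k.
transitivity (\sum_(0 <= k < (2 * m).+1) F k).
  rewrite big_mkord; apply: eq_bigr => k _; rewrite /F; congr (_ * _).
  case: (leqP k m) => hk.
    rewrite (bigD1 (inord (m - k))) //= big1 ?addr0.
      rewrite !mxE inordK; last by have := ltn_ord k; lia.
      by rewrite subnK // eqxx !mul1r.
    move=> r hr; rewrite !mxE; case: eqP => [h|]; last by rewrite mul0r mulr0.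
    by case/eqP: hr; apply/val_inj; rewrite /= inordK; lia.
  rewrite big1 ?mul0r // => r _; rewrite !mxE; case: eqP => [h|]; last by rewrite mul0r mulr0.
  lia.
rewrite (big_cat_nat (n := m.+1)) //=; last by lia.
rewrite [X in _ + X = _]big_nat_cond [X in _ + X = _]big1 ?addr0; last first.
  by move=> k /andP[/andP[hk _] _]; rewrite /F leqNgt hk !mul0r.
rewrite exprDn (exprDn c (- d)) -big_split /=.
pose G k := c ^+ (2 * m - k) * d ^+ k *+ 'C(2 * m, k) +
   c ^+ (2 * m - k) * (- d) ^+ k *+ 'C(2 * m, k).
rewrite (_ : \sum_(i < (2 * m).+1) _ = \sum_(0 <= k < (2 * m).+1) G k); last by rewrite big_mkord.
have Hodd : \sum_(0 <= l < m) G (2 * l).+1 = 0.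
  apply: big1 => l _; rewrite /G (exprS d (2 * l)%N) (exprS (- d) (2 * l)%N) (exprM d 2%N l) (exprM (- d) 2%N l) sqrrN.
  by rewrite mulNr mulrN mulNrn addrN.
rewrite (@split_even _ G m) Hodd addr0.
apply: eq_big_nat => l hl; rewrite /F.
have -> : (l <= m)%N by lia.
rewrite /G -(mulnBr 2%N m l) (exprM c 2%N (m - l)) (exprM d 2%N l) (exprM (- d) 2%N l) sqrrN natrM.
set A := (c ^+ 2) ^+ (m - l). set D := (d ^+ 2) ^+ l. set C := 'C(2 * m, 2 * l).
rewrite (_ : true%:R = 1 :> R) // mul1r -mulr_natr; ring.
Qed.

Lemma key :
  \det (\matrix_(i < (2 * m).+1, j < (2 * m).+1)
          ((a i + a j) ^+ (2 * m) + (a i - a j) ^+ (2 * m)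
           + u * (a i ^+ 2 + v * a j ^+ 2) ^+ (2 * m)) : 'M[R]_((2 * m).+1))
  = (-1) ^+ (m * (2 * m + 1)) * u ^+ (2 * m + 1) * v ^+ (m * (2 * m + 1))
    * ((\prod_(r < (2 * m).+1) 'C(2 * m, r))%N)%:R
    * \prod_(i < (2 * m).+1) \prod_(j < (2 * m).+1 | (i < j)%N)
        (a j ^+ 2 - a i ^+ 2) ^+ 2.
Proof.
have hM : (\matrix_(i < (2 * m).+1, j < (2 * m).+1)
          ((a i + a j) ^+ (2 * m) + (a i - a j) ^+ (2 * m)
           + u * (a i ^+ 2 + v * a j ^+ 2) ^+ (2 * m)) : 'M[R]_((2 * m).+1))
    = W^T *m (B1 + B2) *m W.
  apply/matrixP => i j; rewrite mulmxDr mulmxDl [RHS]mxE (entryE B1) (entryE B2).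
  by rewrite B1E B2E !mxE.
have hV : \det W = \prod_(i < (2 * m).+1) \prod_(j < (2 * m).+1 | (i < j)%N)
        (a j ^+ 2 - a i ^+ 2).
  by rewrite det_Vandermonde; apply: eq_bigr => i _; apply: eq_bigr => j _; rewrite !mxE.
have hB : \det (B1 + B2) = (-1) ^+ (m * (2 * m + 1)) * u ^+ (2 * m + 1)
    * v ^+ (m * (2 * m + 1)) * ((\prod_(r < (2 * m).+1) 'C(2 * m, r))%N)%:R.
  rewrite det_antitrig; last first.
    move=> r k h; rewrite !mxE.
    have /negbTE -> : (r + k != m)%N by lia.
    have /negbTE -> : (r + k != 2 * m)%N by lia.
    by rewrite !mul0r addr0.
  rewrite (eq_bigr (fun j : 'I_(2 * m).+1 => (-1) ^+ j * u * v ^+ j * ('C(2 * m, j))%:R)); last first.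
    move=> j _; rewrite !mxE.
    have -> : (rev_ord j + j == m)%N = false by apply/negbTE; have := ltn_ord j; rewrite /=; lia.
    have -> : (rev_ord j + j == 2 * m)%N = true by apply/eqP; have := ltn_ord j; rewrite /=; lia.
    by rewrite mul0r add0r mul1r !mulrA.
  rewrite !big_split /= !prodrXr prodr_const card_ord natr_prod sum_id_odd addn1.
  done.
rewrite hM !det_mulmx det_tr hB hV.
have hP : \prod_(i < (2 * m).+1) \prod_(j < (2 * m).+1 | (i < j)%N)
        (a j ^+ 2 - a i ^+ 2) ^+ 2 = (\prod_(i < (2 * m).+1) \prod_(j < (2 * m).+1 | (i < j)%N)
        (a j ^+ 2 - a i ^+ 2)) ^+ 2.
  by rewrite -prodrXl; apply: eq_bigr => i _; rewrite prodrXl.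
rewrite hP; ring.
Qed.
End Key.

Theorem theorem1p2 (p m : nat) (hp : prime p) (hpm : p = (4 * m + 1)%N)
  (a : 'I_(2 * m).+1 -> 'F_p)
  (ha : forall i j : 'I_(2 * m).+1, (i < j)%N -> a i ^+ 2 != a j ^+ 2)
  (u v : 'F_p) :
  \det (\matrix_(i < (2 * m).+1, j < (2 * m).+1)
          ((legendre (a i + a j))%:~R + (legendre (a i - a j))%:~R
           + u * (legendre (a i ^+ 2 + v * a j ^+ 2))%:~R) : 'M['F_p]_((2 * m).+1))
  = (-1) ^+ (m * (2 * m + 1)) * u ^+ (2 * m + 1) * v ^+ (m * (2 * m + 1))
    * ((\prod_(r < (2 * m).+1) 'C(2 * m, r))%N)%:R
    * \prod_(i < (2 * m).+1) \prod_(j < (2 * m).+1 | (i < j)%N)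
        (a j ^+ 2 - a i ^+ 2) ^+ 2.
Proof.
have m0 : (0 < m)%N by case: m hpm a ha => [|//] hpm; rewrite hpm in hp.
rewrite -(@key _ m m0 a u v); congr (\det _).
by apply/matrixP => i j; rewrite !mxE !(@euler p m hp hpm).
Qed.
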